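(* Consider the stochastic bipartite matching model described in the context, under the stability condition, with stationary distribution $\pi$. Fix $i\in\mathcal{I}$, and for $\mathcal{A}\in\mathcal{J}_0$ define $\ell_i(\mathcal{A})=\sum_{(c,d)\in\Pi_{\mathcal{A}}}|c|_i\,\pi(c,d)$ (so that $\ell_i(\mathcal{A})/\pi(\mathcal{A})$ is the stationary mean number of unmatched class-$i$ customers given that the set of unmatched classes is $\mathcal{A}$), with the convention $\ell_i(\mathcal{A})=0$ if $\mathcal{A}\notin\mathcal{J}_0$. Then the stationary mean number of unmatched class-$i$ customers is $L_i=\sum_{\mathcal{A}\in\mathcal{J}_0}\ell_i(\mathcal{A})$, we have $\ell_i(\mathcal{A})=0$ whenever $i\notin\mathcal{A}$, and for each $\mathcal{A}\in\mathcal{J}$ with $i\in\mathcal{A}$, \[ \begin{aligned} \Delta(\mathcal{A})\,\ell_i(\mathcal{A}) ={}& \lambda_i\,\mu(\mathcal{A}\cap\mathcal{K})\big(\pi(\mathcal{A})+\pi(\mathcal{A}\setminus\{i\})\big) + \lambda_i\sum_{k\in\mathcal{A}\cap\mathcal{K}}\mu_k\big(\pi(\mathcal{A}\setminus\{k\})+\pi(\mathcal{A}\setminus\{i,k\})\big)\\ &+\mu(\mathcal{A}\cap\mathcal{K})\sum_{j\in\mathcal{A}\cap\mathcal{I}}\lambda_j\,\ell_i(\mathcal{A}\setminus\{j\}) + \lambda(\mathcal{A}\cap\mathcal{I})\sum_{k\in\mathcal{A}\cap\mathcal{K}}\mu_k\,\ell_i(\mathcal{A}\setminus\{k\})\\ &+\sum_{j\in\mathcal{A}\cap\mathcal{I}}\sum_{k\in\mathcal{A}\cap\mathcal{K}}\lambda_j\mu_k\,\ell_i(\mathcal{A}\setminus\{j,k\}).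 \end{aligned} \]
   Context: Let $\mathcal{I}$ (customer classes) and $\mathcal{K}$ (server classes) be disjoint finite non-empty sets, and consider a connected bipartite graph (the compatibility graph) on $\mathcal{I}\cup\mathcal{K}$ whose edges all join an element of $\mathcal{I}$ to an element of $\mathcal{K}$; write $i\sim k$ if $i\in\mathcal{I}$ and $k\in\mathcal{K}$ are adjacent and $i\nsim k$ otherwise. For $i\in\mathcal{I}$ let $\mathcal{K}_i=\{k\in\mathcal{K}: i\sim k\}$ and for $k\in\mathcal{K}$ let $\mathcal{I}_k=\{i\in\mathcal{I}: i\sim k\}$. Let $\lambda_i>0$ ($i\in\mathcal{I}$) and $\mu_k>0$ ($k\in\mathcal{K}$) with $\sum_i\lambda_i=\sum_k\mu_k=1$. For $\mathcal{A}\subseteq\mathcal{I}$ write $\lambda(\mathcal{A})=\sum_{i\in\mathcal{A}}\lambda_i$ and $\mathcal{K}(\mathcal{A})=\bigcup_{i\in\mathcal{A}}\mathcal{K}_i$; for $\mathcal{A}\subseteq\mathcal{K}$ write $\mu(\mathcal{A})=\sum_{k\in\mathcal{A}}\mu_k$ and $\mathcal{I}(\mathcal{A})=\bigcup_{k\in\mathcal{A}}\mathcal{I}_k$. Model: time is slotted; in each slot exactly one customer and one server arrive, the customer being of class $i$ with probability $\lambda_i$ and the server of class $k$ with probability $\mu_k$, independently within and across slots. Unmatched customers and unmatched servers wait in two queues in arrival order. Upon each arrival (first-come-first-matched policy): (1) the incoming customer is matched with the longest-waiting compatible unmatched server, if any; (2) the incoming server is matched with the longest-waiting compatible unmatched customer,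 if any; (3) if neither can be matched with a waiting item, they are matched with each other if compatible; (4) any incoming item still unmatched is appended to the back of its queue. Matched items leave immediately. The state is $(c,d)$ with $c=(c_1,\dots,c_n)$ the classes of unmatched customers and $d=(d_1,\dots,d_n)$ the classes of unmatched servers, in arrival order (the two lengths are always equal); the state space is $\Pi=\bigcup_{n\ge0}\{(c,d)\in\mathcal{I}^n\times\mathcal{K}^n: c_p\nsim d_q\ \forall p,q\}$, and $\varnothing$ denotes the empty state. For a sequence $c$, $|c|_i$ is the number of occurrences of $i$ in $c$. Stability condition (assumed): $\lambda(\mathcal{A})<\mu(\mathcal{K}(\mathcal{A}))$ for every non-empty $\mathcal{A}\subsetneq\mathcal{I}$ (equivalently $\mu(\mathcal{A})<\lambda(\mathcal{I}(\mathcal{A}))$ for every non-empty $\mathcal{A}\subsetneq\mathcal{K}$). Then the Markov chain of states is ergodic with stationary distribution $\pi(c,d)=\pi(\varnothing)\prod_{p=1}^n \frac{\lambda_{c_p}}{\mu(\mathcal{K}(\{c_1,\dots,c_p\}))}\frac{\mu_{d_p}}{\lambda(\mathcal{I}(\{d_1,\dots,d_p\}))}$, $(c,d)\in\Pi$. Let $\mathcal{J}$ be the family of independent sets $\mathcal{A}\subseteq\mathcal{I}\cup\mathcal{K}$ of the compatibility graph such that $\mathcal{A}\cap\mathcal{I}$ and $\mathcal{A}\cap\mathcal{K}$ are both non-empty, and $\mathcal{J}_0=\mathcal{J}\cup\{\emptyset\}$. For $\mathcal{A}\in\mathcal{J}_0$, let $\Pi_{\mathcal{A}}$ be the set of $(c,d)\in\Pi$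 with $\{c_1,\dots,c_n\}=\mathcal{A}\cap\mathcal{I}$ and $\{d_1,\dots,d_n\}=\mathcal{A}\cap\mathcal{K}$, and $\pi(\mathcal{A})=\sum_{(c,d)\in\Pi_{\mathcal{A}}}\pi(c,d)$; by convention $\pi(\mathcal{A})=0$ if $\mathcal{A}\notin\mathcal{J}_0$. For $\mathcal{A}\in\mathcal{J}$, $\Delta(\mathcal{A})=\mu(\mathcal{K}(\mathcal{A}\cap\mathcal{I}))\,\lambda(\mathcal{I}(\mathcal{A}\cap\mathcal{K}))-\lambda(\mathcal{A}\cap\mathcal{I})\,\mu(\mathcal{A}\cap\mathcal{K})$. *)

(* Defs.v *)
From HB Require Import structures.
From mathcomp Require Import all_boot all_order all_algebra fingraph.
From mathcomp Require Import reals.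
From mathcomp Require Import topology normedtype sequences.
Set Implicit Arguments. Unset Strict Implicit. Unset Printing Implicit Defensive.
Import Order.TTheory GRing.Theory Num.Theory numFieldNormedType.Exports.
Local Open Scope ring_scope.

Definition rseries {R : realType} (u : nat -> R) : R :=
  limn (fun N => \sum_(n < N) u n).

Section MatchingModel.
Variables (R : realType) (I K : finType) (adj : I -> K -> bool)
          (lam : I -> R) (mu : K -> R).

Definition compat_edge : rel (I + K) := fun x y =>
  match x, y with
  | inl i, inr k => adj i k
  | inr k, inl i => adj i k
  | _, _ => false
  end.

Definition graph_connected : Prop := forall x y : I + K, connect compat_edge x y.

Definition lamS (A : {set I}) : R := \sum_(i in A) lam i.
Definition muS (A : {set K}) : R := \sum_(k in A) mu k.
Definition KofS (A : {set I}) : {set K} := [set k | [exists i in A, adj i k]].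
Definition IofS (A : {set K}) : {set I} := [set i | [exists k in A, adj i k]].

Definition stable : Prop :=
  forall A : {set I}, A != set0 -> A != [set: I] -> lamS A < muS (KofS A).

Definition partI (A : {set (I + K)}) : {set I} := [set i | inl i \in A].
Definition partK (A : {set (I + K)}) : {set K} := [set k | inr k \in A].
Definition indep (A : {set (I + K)}) : bool :=
  [forall i, forall k, ((inl i \in A) && (inr k \in A)) ==> ~~ adj i k].
Definition inJ (A : {set (I + K)}) : bool :=
  [&& indep A, partI A != set0 & partK A != set0].
Definition inJ0 (A : {set (I + K)}) : bool := inJ A || (A == set0).

(** States with n unmatched customers and n unmatched servers:
    pairs (c, d) of n-tuples with c_p incompatible with d_q for all p, q. *)
Definition valid_state n (c : n.-tuple I) (d : n.-tuple K) : bool :=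
  [forall p, forall q, ~~ adj (tnth c p) (tnth d q)].

Definition state_classes n (c : n.-tuple I) (d : n.-tuple K) : {set (I + K)} :=
  [set x | match x with inl i => i \in c | inr k => k \in d end].

Definition weight n (c : n.-tuple I) (d : n.-tuple K) : R :=
  \prod_(p < n)
    ((lam (tnth c p) / muS (KofS [set x in take p.+1 c]))
     * (mu (tnth d p) / lamS (IofS [set x in take p.+1 d]))).

Definition pi_empty : R :=
  (rseries (fun n => \sum_(c : n.-tuple I) \sum_(d : n.-tuple K | valid_state c d)
      weight c d))^-1.

Definition pi n (c : n.-tuple I) (d : n.-tuple K) : R := pi_empty * weight c d.

Definition piA (A : {set (I + K)}) : R :=
  if inJ0 A then
    rseries (fun n => \sum_(c : n.-tuple I)
       \sum_(d : n.-tuple K | valid_state c d && (state_classes c d == A)) pi c d)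
  else 0.

Definition ell (i : I) (A : {set (I + K)}) : R :=
  if inJ0 A then
    rseries (fun n => \sum_(c : n.-tuple I)
       \sum_(d : n.-tuple K | valid_state c d && (state_classes c d == A))
          ((count_mem i c)%:R * pi c d))
  else 0.

Definition meanL (i : I) : R :=
  rseries (fun n => \sum_(c : n.-tuple I) \sum_(d : n.-tuple K | valid_state c d)
     ((count_mem i c)%:R * pi c d)).

Definition Delta (A : {set (I + K)}) : R :=
  muS (KofS (partI A)) * lamS (IofS (partK A)) - lamS (partI A) * muS (partK A).

End MatchingModel.

(* Main.v *)
Require Import Defs.
From HB Require Import structures.
From mathcomp Require Import all_boot all_order all_algebra fingraph.
From mathcomp Require Import reals.
From mathcomp Require Import topology normedtype sequences.
From mathcomp Require Import ring lra.
Import Order.TTheory GRing.Theory Num.Theory numFieldNormedType.Exports.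
Set Implicit Arguments. Unset Strict Implicit. Unset Printing Implicit Defensive.
Local Open Scope ring_scope.
Section Tup.
Variables (R : realType) (T : finType).

Lemma thead_eta n (t : n.+1.-tuple T) : thead t :: behead t = t.
Proof. by rewrite [in RHS](tuple_eta t). Qed.

Lemma big_tuple_rcons n (F : n.+1.-tuple T -> R) :
  \sum_(t : n.+1.-tuple T) F t = \sum_(t : n.-tuple T) \sum_(x : T) F [tuple of rcons t x].
Proof.
rewrite pair_big /=.
pose h := fun p : n.-tuple T * T => [tuple of rcons p.1 p.2].
rewrite (reindex h) //; apply: onW_bij.
pose g := fun t : n.+1.-tuple T =>
  ([tuple of belast (thead t) (behead_tuple t)], last (thead t) (behead t)).
exists g.
- move=> [t x]; rewrite /g /h /=.
  have := thead_eta [tuple of rcons t x]; rewrite lastI /= => /rcons_inj [E1 E2].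
  by congr pair => //; apply: val_inj; rewrite /= E1.
- move=> t; rewrite /g /h /=; apply: val_inj => /=.
  by rewrite -lastI thead_eta.
Qed.
End Tup.
Section Model.
Variables (R : realType) (I K : finType) (adj : I -> K -> bool)
          (lam : I -> R) (mu : K -> R).
Hypothesis Hlam : forall i, 0 < lam i.
Hypothesis Hmu : forall k, 0 < mu k.

Local Notation W := (weight adj lam mu).
Local Notation valid := (valid_state adj).
Local Notation cls := (@state_classes I K _).

Lemma valid_indep n (c : n.-tuple I) (d : n.-tuple K) :
  valid c d = indep adj (cls c d).
Proof.
apply/forallP/forallP => [H i|H p].
  apply/forallP => k; rewrite !inE /=; apply/implyP => /andP[ic kd].
  case/tnthP: ic => p ->; case/tnthP: kd => q ->; exact: (forallP (H p) q).
apply/forallP => q; have := forallP (H (tnth c p)) (tnth d q).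
by rewrite !inE /= !mem_tnth.
Qed.

Lemma partI_cls n (c : n.-tuple I) (d : n.-tuple K) : partI (cls c d) = [set x in c].
Proof. by apply/setP => x; rewrite !inE. Qed.
Lemma partK_cls n (c : n.-tuple I) (d : n.-tuple K) : partK (cls c d) = [set x in d].
Proof. by apply/setP => x; rewrite !inE. Qed.

Lemma cls0 (c : 0.-tuple I) (d : 0.-tuple K) : cls c d = set0.
Proof. by rewrite (tuple0 c) (tuple0 d); apply/setP => -[x|x]; rewrite !inE. Qed.

Lemma cls_J0 n (c : n.-tuple I) (d : n.-tuple K) : valid c d -> inJ0 adj (cls c d).
Proof.
case: n c d => [|n] c d V; first by rewrite cls0 /inJ0 eqxx orbT.
rewrite /inJ0 /inJ -valid_indep V /=; apply/orP; left; apply/andP; split.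
  by apply/set0Pn; exists (tnth c ord0); rewrite !inE /= mem_tnth.
by apply/set0Pn; exists (tnth d ord0); rewrite !inE /= mem_tnth.
Qed.

Lemma muS_ge0 (A : {set K}) : 0 <= muS mu A.
Proof. by apply: sumr_ge0 => k _; exact: ltW. Qed.
Lemma lamS_ge0 (A : {set I}) : 0 <= lamS lam A.
Proof. by apply: sumr_ge0 => k _; exact: ltW. Qed.

Lemma weight_ge0 n (c : n.-tuple I) (d : n.-tuple K) : 0 <= W c d.
Proof.
rewrite /weight; apply: prodr_ge0 => p _; apply: mulr_ge0; apply: divr_ge0;
  by [apply: ltW | apply: muS_ge0 | apply: lamS_ge0].
Qed.

Lemma cls_rcons n (c : n.-tuple I) (d : n.-tuple K) j k :
  cls [tuple of rcons c j] [tuple of rcons d k] = cls c d :|: [set inl j; inr k].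
Proof.
apply/setP => -[x|x]; rewrite !inE /= mem_rcons in_cons.
  by rewrite orbC orbF.
by rewrite orbC.
Qed.

Lemma weight_rcons n (c : n.-tuple I) (d : n.-tuple K) j k :
  W [tuple of rcons c j] [tuple of rcons d k] =
  W c d * ((lam j / muS mu (KofS adj [set x in rcons c j]))
           * (mu k / lamS lam (IofS adj [set x in rcons d k]))).
Proof.
rewrite /weight big_ord_recr /=; congr (_ * _).
  apply: eq_bigr => p _.
  have Hp : (p < size c)%N by rewrite size_tuple.
  have Hq : (p < size d)%N by rewrite size_tuple.
  rewrite !(tnth_nth j) !(tnth_nth k) /= !nth_rcons Hp Hq.
  rewrite -(tnth_nth j) -(tnth_nth k).
  rewrite -!cats1 !takel_cat ?size_tuple //.
by rewrite !(tnth_nth j) !(tnth_nth k) /= !nth_rcons !size_tuple ltnn !eqxx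
   !take_oversize // size_rcons size_tuple.
Qed.

End Model.
Section Sets.
Variables (R : realType) (T : finType).

Lemma setU1_in (x : T) (X : {set T}) : x \in X -> x |: X = X.
Proof. by move=> xX; apply/setP => y; rewrite !inE; case: eqP => // ->. Qed.

Lemma setU1_eqD (x : T) (X A : {set T}) : x \notin X -> x \in A ->
  (x |: X == A) = (X == A :\ x).
Proof.
move=> xX xA; apply/eqP/eqP => [<-|->]; first by rewrite setU1K.
by rewrite setD1K.
Qed.

Lemma set_neq (x : T) (X Y : {set T}) : x \in X -> x \notin Y -> (X == Y) = false.
Proof. by move=> xX xY; apply/eqP => E; move: xY; rewrite -E xX. Qed.

Lemma set_neq' (x : T) (X Y : {set T}) : x \in Y -> x \notin X -> (X == Y) = false.
Proof. by move=> xY xX; rewrite eq_sym (set_neq xY xX). Qed.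

Lemma split4 (S A : {set T}) a b : a \in A -> b \in A -> a != b ->
  ((S :|: [set a; b] == A)%:R : R) =
  (S == A)%:R + (S == A :\ a)%:R + (S == A :\ b)%:R + (S == A :\ a :\ b)%:R.
Proof.
move=> aA bA ab.
have -> : S :|: [set a; b] = a |: (b |: S).
  by apply/setP => y; rewrite !inE; case: (y == a); case: (y == b); rewrite ?orbT ?orbF.
have aAb : a \in A :\ b by rewrite !inE ab aA.
have bAa : b \in A :\ a by rewrite !inE eq_sym ab bA.
have aD : a \notin A :\ a by rewrite !inE eqxx.
have bD : b \notin A :\ b by rewrite !inE eqxx.
have aDD : a \notin A :\ a :\ b by rewrite !inE eqxx andbF.
have bDD : b \notin A :\ a :\ b by rewrite !inE eqxx.
case Sa: (a \in S); case Sb: (b \in S).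
- rewrite setU1_in; last by rewrite !inE Sa orbT.
  rewrite setU1_in // (set_neq Sa aD) (set_neq Sb bD) (set_neq Sa aDD).
  by rewrite /= ?mulr0n ?add0r ?addr0.
- rewrite setU1_in; last by rewrite !inE Sa orbT.
  rewrite setU1_eqD ?Sb // (set_neq Sa aD) (set_neq Sa aDD).
  rewrite (set_neq' bA (negbT Sb)).
  by rewrite /= ?mulr0n ?add0r ?addr0.
- rewrite (setU1_in Sb).
  rewrite setU1_eqD ?Sa //.
  rewrite (set_neq' aA (negbT Sa)) (set_neq' aAb (negbT Sa)) (set_neq Sb bDD).
  by rewrite /= ?mulr0n ?add0r ?addr0.
- rewrite setU1_eqD //; last by rewrite !inE negb_or Sa andbT.
  rewrite setU1_eqD ?Sb //.
  rewrite (set_neq' aA (negbT Sa)) (set_neq' bAa (negbT Sb)) (set_neq' aAb (negbT Sa)).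
  by rewrite /= ?mulr0n ?add0r ?addr0.
Qed.
End Sets.
Section Rec.
Variables (R : realType) (I K : finType) (adj : I -> K -> bool)
          (lam : I -> R) (mu : K -> R).
Hypothesis Hlam : forall i, 0 < lam i.
Hypothesis Hmu : forall k, 0 < mu k.

Local Notation W := (weight adj lam mu).
Local Notation valid := (valid_state adj).
Local Notation cls := (@state_classes I K _).

Definition tFun (h : seq I -> R) (B : {set (I + K)}) (n : nat) : R :=
  \sum_(c : n.-tuple I) \sum_(d : n.-tuple K | valid c d && (cls c d == B)) h c * W c d.
Local Notation tF := tFun.
Definition CC (A : {set (I + K)}) : R :=
  muS mu (KofS adj (partI A)) * lamS lam (IofS adj (partK A)).

Lemma indep_sub (S A : {set (I + K)}) : S \subset A -> indep adj A -> indep adj S.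
Proof.
move=> /subsetP SA /forallP H; apply/forallP => i; apply/forallP => k.
apply/implyP => /andP[iS kS]; have := forallP (H i) k.
by rewrite (SA _ iS) (SA _ kS).
Qed.

Lemma big_tuple_rcons2 n (G : n.+1.-tuple I -> n.+1.-tuple K -> R) :
  \sum_(c : n.+1.-tuple I) \sum_(d : n.+1.-tuple K) G c d =
  \sum_(c : n.-tuple I) \sum_(d : n.-tuple K) \sum_(j : I) \sum_(k : K)
     G [tuple of rcons c j] [tuple of rcons d k].
Proof.
rewrite big_tuple_rcons; apply: eq_bigr => c _.
under eq_bigr => j _ do rewrite big_tuple_rcons.
by rewrite exchange_big.
Qed.

Lemma term_rec (A : {set (I + K)}) (HA : inJ adj A) (HC : CC A != 0) n
  (c : n.-tuple I) (d : n.-tuple K) j k (h : seq I -> R) :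
  CC A * ((valid [tuple of rcons c j] [tuple of rcons d k]
           && (cls [tuple of rcons c j] [tuple of rcons d k] == A))%:R
          * (h (rcons c j) * W [tuple of rcons c j] [tuple of rcons d k])) =
  lam j * mu k * (h (rcons c j) *
     ((valid c d && (cls c d :|: [set inl j; inr k] == A))%:R * W c d)).
Proof.
rewrite cls_rcons.
case E: (cls c d :|: [set inl j; inr k] == A); last by rewrite !andbF /= !mul0r !mulr0.
move/eqP: E => E.
have iA : indep adj A by case/and3P: HA.
rewrite valid_indep cls_rcons E iA valid_indep.
rewrite (indep_sub _ iA); last by rewrite -E subsetUl.
rewrite weight_rcons.
have -> : [set x in rcons c j] = partI A.
  by rewrite -(partI_cls [tuple of rcons c j] [tuple of rcons d k]) cls_rcons E.
have -> : [set x in rcons d k] = partK A.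
  by rewrite -(partK_cls [tuple of rcons c j] [tuple of rcons d k]) cls_rcons E.
move: HC; rewrite /CC mulf_eq0 negb_or => /andP[H1 H2].
rewrite /= !mul1r.
set X := muS mu _ in H1 *; set Y := lamS lam _ in H2 *.
field.
by rewrite H1 H2.
Qed.

Lemma ifR (b : bool) (x : R) : (if b then x else 0) = b%:R * x.
Proof. by case: b; rewrite ?mul1r ?mul0r. Qed.

Lemma tF_mk h B n : tF h B n =
  \sum_(c : n.-tuple I) \sum_(d : n.-tuple K) (valid c d && (cls c d == B))%:R * (h c * W c d).
Proof. by apply: eq_bigr => c _; rewrite big_mkcond; apply: eq_bigr => d _; rewrite ifR. Qed.

Lemma four (A : {set (I + K)}) j k n h : inl j \in A -> inr k \in A ->
  tF h A n + tF h (A :\ inl j) n + tF h (A :\ inr k) n + tF h (A :\ inl j :\ inr k) n =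
  \sum_(c : n.-tuple I) \sum_(d : n.-tuple K)
     h c * ((valid c d && (cls c d :|: [set inl j; inr k] == A))%:R * W c d).
Proof.
move=> jA kA; rewrite !tF_mk -!big_split; apply: eq_bigr => c _.
rewrite -!big_split; apply: eq_bigr => d _ /=.
case: (valid c d) => /=; last by rewrite !mul0r !mulr0 !addr0.
rewrite (split4 _ _ jA kA) //; ring.
Qed.

Lemma exch4 (F : I -> K -> forall n, n.-tuple I -> n.-tuple K -> R) n :
  \sum_(j : I) \sum_(k : K) \sum_(c : n.-tuple I) \sum_(d : n.-tuple K) F j k n c d =
  \sum_(c : n.-tuple I) \sum_(d : n.-tuple K) \sum_(j : I) \sum_(k : K) F j k n c d.
Proof.
under eq_bigr => j _ do rewrite exchange_big.
under eq_bigr => j _ do under eq_bigr => c _ do rewrite exchange_big.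
rewrite exchange_big; apply: eq_bigr => c _.
by rewrite exchange_big.
Qed.

Lemma tF_rec (A : {set (I + K)}) (HA : inJ adj A) (HC : CC A != 0) n h :
  CC A * tF h A n.+1 =
  \sum_(j in partI A) \sum_(k in partK A) lam j * mu k *
    (tF (fun s => h (rcons s j)) A n + tF (fun s => h (rcons s j)) (A :\ inl j) n
     + tF (fun s => h (rcons s j)) (A :\ inr k) n
     + tF (fun s => h (rcons s j)) (A :\ inl j :\ inr k) n).
Proof.
rewrite tF_mk big_tuple_rcons2 mulr_sumr.
under eq_bigr => c _ do (rewrite mulr_sumr; under eq_bigr => d _ do
  (rewrite mulr_sumr; under eq_bigr => j _ do
     (rewrite mulr_sumr; under eq_bigr => k _ do rewrite term_rec //))).
rewrite -(exch4 (fun j k n c d => lam j * mu k * (h (rcons c j) *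
     ((valid c d && (cls c d :|: [set inl j; inr k] == A))%:R * W c d)))).
rewrite [RHS]big_mkcond; apply: eq_bigr => j _; rewrite [in RHS]big_mkcond.
case jA: (inl j \in A) => /=; rewrite !inE jA.
  apply: eq_bigr => k _; rewrite inE.
  case kA: (inr k \in A).
    rewrite four ?jA ?kA //.
    rewrite mulr_sumr; apply: eq_bigr => c _; rewrite mulr_sumr.
    by apply: eq_bigr => d _.
  rewrite big1 // => c _; rewrite big1 // => d _.
  suff -> : (cls c d :|: [set inl j; inr k] == A) = false by rewrite andbF /= !mul0r !mulr0.
  by apply: (set_neq (x := inr k)); rewrite ?inE ?eqxx ?orbT ?kA.
rewrite big1 // => k _; rewrite big1 // => c _; rewrite big1 // => d _.
suff -> : (cls c d :|: [set inl j; inr k] == A) = false by rewrite andbF /= !mul0r !mulr0.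
by apply: (set_neq (x := inl j)); rewrite ?inE ?eqxx ?orbT ?jA.
Qed.

End Rec.
Section Pos.
Variables (R : realType) (I K : finType) (adj : I -> K -> bool)
          (lam : I -> R) (mu : K -> R).
Hypothesis HI : (0 < #|I|)%N.
Hypothesis HK : (0 < #|K|)%N.
Hypothesis Hconn : graph_connected adj.
Hypothesis Hlam : forall i, 0 < lam i.
Hypothesis Hmu : forall k, 0 < mu k.
Hypothesis Hlam1 : \sum_(i : I) lam i = 1.
Hypothesis Hmu1 : \sum_(k : K) mu k = 1.
Hypothesis Hstab : stable adj lam mu.

Lemma nbr_k k : exists i, adj i k.
Proof.
case/card_gt0P: HI => i0 _.
case/connectP: (Hconn (inr k) (inl i0)) => -[|y p] /=; first by [].
by case: y => [i|k'] //= /andP[a _] _; exists i.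
Qed.

Lemma nbr_i i : exists k, adj i k.
Proof.
case/card_gt0P: HK => k0 _.
case/connectP: (Hconn (inl i) (inr k0)) => -[|y p] /=; first by [].
by case: y => [i'|k] //= /andP[a _] _; exists k.
Qed.

Lemma muS_ind (S : {set K}) : muS mu S = \sum_(k : K) (k \in S)%:R * mu k.
Proof. by rewrite /muS big_mkcond; apply: eq_bigr => k _; rewrite ifR. Qed.
Lemma lamS_ind (S : {set I}) : lamS lam S = \sum_(i : I) (i \in S)%:R * lam i.
Proof. by rewrite /lamS big_mkcond; apply: eq_bigr => k _; rewrite ifR. Qed.

Lemma muS_compl (S : {set K}) : muS mu (~: S) = 1 - muS mu S.
Proof.
rewrite !muS_ind -[X in X - _]Hmu1 -sumrB; apply: eq_bigr => k _; rewrite inE.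
by case: (k \in S) => /=; rewrite ?mulr1n ?mulr0n ?mul1r ?mul0r ?subrr ?subr0.
Qed.
Lemma lamS_compl (S : {set I}) : lamS lam (~: S) = 1 - lamS lam S.
Proof.
rewrite !lamS_ind -[X in X - _]Hlam1 -sumrB; apply: eq_bigr => k _; rewrite inE.
by case: (k \in S) => /=; rewrite ?mulr1n ?mulr0n ?mul1r ?mul0r ?subrr ?subr0.
Qed.

Lemma muS_sub (S T : {set K}) : S \subset T -> muS mu S <= muS mu T.
Proof.
move/subsetP => ST; rewrite !muS_ind; apply: ler_sum => k _.
case kS: (k \in S); first by rewrite (ST _ kS).
by rewrite mul0r; apply: mulr_ge0 => //; exact: ltW.
Qed.

Lemma muS_gt0 (S : {set K}) : S != set0 -> 0 < muS mu S.
Proof.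
case/set0Pn => k kS; rewrite /muS (bigD1 k) //=.
by apply: ltr_pwDl => //; apply: sumr_ge0 => x _; exact: ltW.
Qed.
Lemma lamS_gt0 (S : {set I}) : S != set0 -> 0 < lamS lam S.
Proof.
case/set0Pn => k kS; rewrite /lamS (bigD1 k) //=.
by apply: ltr_pwDl => //; apply: sumr_ge0 => x _; exact: ltW.
Qed.

Lemma muS_lt1 (S : {set K}) : S != [set: K] -> muS mu S < 1.
Proof.
move=> ST; have : ~: S != set0.
  by apply: contra ST => /eqP E; rewrite -(setCK S) E setC0.
move/muS_gt0; rewrite muS_compl; lra.
Qed.

Lemma stabK (Y : {set K}) : Y != set0 -> Y != [set: K] ->
  muS mu Y < lamS lam (IofS adj Y).
Proof.
move=> Y0 YT.
have [Z0|Z0] := eqVneq (~: IofS adj Y) set0.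
  have -> : IofS adj Y = [set: I] by rewrite -(setCK (IofS adj Y)) Z0 setC0.
  have -> : lamS lam [set: I] = 1.
    by rewrite -Hlam1 /lamS; apply: eq_bigl => x; rewrite inE.
  exact: muS_lt1.
have ZT : ~: IofS adj Y != [set: I].
  case/set0Pn: Y0 => k kY; case: (nbr_k k) => i ik.
  apply/eqP => /setP /(_ i); rewrite !inE => /negP; apply.
  by apply/existsP; exists k; rewrite kY.
have := Hstab Z0 ZT; rewrite lamS_compl.
have : muS mu (KofS adj (~: IofS adj Y)) <= muS mu (~: Y).
  apply: muS_sub; apply/subsetP => k; rewrite !inE => /existsP[i /andP[iZ ik]].
  apply/negP => kY; move: iZ; rewrite !inE => /negP; apply.
  by apply/existsP; exists k; rewrite kY.
rewrite muS_compl; lra.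
Qed.

Lemma CC_pos (A : {set (I + K)}) : inJ adj A ->
  0 < lamS lam (partI A) * muS mu (partK A) /\
  lamS lam (partI A) * muS mu (partK A) < CC adj lam mu A.
Proof.
case/and3P => iA X0 Y0.
have XT : partI A != [set: I].
  case/set0Pn: Y0 => k; rewrite inE => kA; case: (nbr_k k) => i ik.
  apply/eqP => /setP /(_ i); rewrite !inE => iA'.
  by have := forallP (forallP iA i) k; rewrite iA' kA ik.
have YT : partK A != [set: K].
  case/set0Pn: X0 => i; rewrite inE => iA'; case: (nbr_i i) => k ik.
  apply/eqP => /setP /(_ k); rewrite !inE => kA.
  by have := forallP (forallP iA i) k; rewrite iA' kA ik.
have h1 := Hstab X0 XT.
have h2 := stabK Y0 YT.
have a0 := lamS_gt0 X0.
have b0 := muS_gt0 Y0.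
rewrite /CC; split; first exact: mulr_gt0.
nra.
Qed.

End Pos.
Section Conv.
Variables (R : realType) (I K : finType) (adj : I -> K -> bool)
          (lam : I -> R) (mu : K -> R).
Hypothesis HI : (0 < #|I|)%N.
Hypothesis HK : (0 < #|K|)%N.
Hypothesis Hconn : graph_connected adj.
Hypothesis Hlam : forall i, 0 < lam i.
Hypothesis Hmu : forall k, 0 < mu k.
Hypothesis Hlam1 : \sum_(i : I) lam i = 1.
Hypothesis Hmu1 : \sum_(k : K) mu k = 1.
Hypothesis Hstab : stable adj lam mu.

Local Notation W := (weight adj lam mu).
Local Notation valid := (valid_state adj).
Local Notation cls := (@state_classes I K _).
Local Notation tF := (tFun adj lam mu).
Local Notation CC := (CC adj lam mu).

Definition SF (h : seq I -> R) (B : {set (I + K)}) (N : nat) : R := \sum_(n < N) tF h B n.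

Lemma tF_ge0 h B n : (forall s, 0 <= h s) -> 0 <= tF h B n.
Proof.
move=> hp; apply: sumr_ge0 => c _; apply: sumr_ge0 => d _.
by apply: mulr_ge0 => //; exact: weight_ge0.
Qed.

Lemma SF_nd h B : (forall s, 0 <= h s) -> nondecreasing_seq (SF h B).
Proof.
move=> hp; apply/nondecreasing_seqP => n; rewrite /SF big_ord_recr /=.
by rewrite lerDl tF_ge0.
Qed.

Lemma cls_J n (c : n.-tuple I) (d : n.-tuple K) : (0 < n)%N -> valid c d -> inJ adj (cls c d).
Proof.
case: n c d => [|n] c d // _ V.
have := cls_J0 V; rewrite /inJ0 => /orP[//|/eqP E].
have : inl (tnth c ord0) \in cls c d by rewrite !inE /= mem_tnth.
by rewrite E inE.
Qed.

Lemma tF_notJ h B n : ~~ inJ adj B -> (0 < n)%N -> tF h B n = 0.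
Proof.
move=> nB n0; apply: big1 => c _; apply: big1 => d /andP[V /eqP E].
by move: nB; rewrite -E cls_J.
Qed.

Lemma tF_J_0 h B : inJ adj B -> tF h B 0 = 0.
Proof.
move=> JB; apply: big1 => c _; apply: big1 => d /andP[V /eqP E].
move: JB; rewrite -E cls0 /inJ.
have -> : partI (set0 : {set (I + K)}) = set0 by apply/setP => x; rewrite !inE.
by rewrite eqxx andbF.
Qed.


Lemma tF_notJ0 h B n : ~~ inJ0 adj B -> tF h B n = 0.
Proof.
move=> nB; apply: big1 => c _; apply: big1 => d /andP[V /eqP E].
by move: nB; rewrite -E cls_J0.
Qed.

Lemma SF_notJ_le h B N : (forall s, 0 <= h s) -> ~~ inJ adj B -> SF h B N <= tF h B 0.
Proof.
move=> hp nB; case: N => [|N]; first by rewrite /SF big_ord0 tF_ge0.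
rewrite /SF big_ord_recl big1 ?addr0 // => p _.
by rewrite tF_notJ.
Qed.

Lemma CC_neq0 A : inJ adj A -> CC A != 0.
Proof.
move=> HA; have [h1 h2] := CC_pos HI HK Hconn Hlam Hmu Hlam1 Hmu1 Hstab HA.
by rewrite gt_eqF // (lt_trans h1 h2).
Qed.

Lemma SF_rec h A N : inJ adj A ->
  CC A * SF h A N.+1 =
  \sum_(j in partI A) \sum_(k in partK A) lam j * mu k *
    (SF (fun s => h (rcons s j)) A N + SF (fun s => h (rcons s j)) (A :\ inl j) N
     + SF (fun s => h (rcons s j)) (A :\ inr k) N
     + SF (fun s => h (rcons s j)) (A :\ inl j :\ inr k) N).
Proof.
move=> HA; rewrite /SF big_ord_recl tF_J_0 // add0r mulr_sumr.
have HC := CC_neq0 HA.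
under eq_bigr => p _ do rewrite /= (tF_rec HA HC).
rewrite exchange_big; apply: eq_bigr => j _.
rewrite exchange_big; apply: eq_bigr => k _.
by rewrite -mulr_sumr -!big_split.
Qed.

Lemma sum2_const (A : {set (I + K)}) (X : R) :
  \sum_(j in partI A) \sum_(k in partK A) lam j * mu k * X =
  lamS lam (partI A) * muS mu (partK A) * X.
Proof.
rewrite /lamS /muS !mulr_suml; apply: eq_bigr => j _.
by rewrite mulr_sumr mulr_suml; apply: eq_bigr => k _.
Qed.

Lemma cvg_core (u r : nat -> R) (a C M : R) :
  nondecreasing_seq u -> 0 <= a -> a < C ->
  (forall N, C * u N.+1 = a * u N + r N) -> (forall N, r N <= M) -> cvgn u.
Proof.
move=> nd a0 aC Hr HM; apply: nondecreasing_is_cvgn => //.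
exists (M / (C - a)) => _ [N _ <-].
rewrite ler_pdivlMr ?subr_gt0 //.
have h1 : u N <= u N.+1 by apply: nd.
have h2 := Hr N; have h3 := HM N.
have C0 : 0 <= C by apply: le_trans (ltW aC).
have : C * u N <= C * u N.+1 by apply: ler_wpM2l.
nra.
Qed.

Lemma card_D1 (B : {set (I + K)}) x : x \in B -> (#|B :\ x| < #|B|)%N.
Proof. by move=> xB; rewrite (cardsD1 x B) xB. Qed.

Lemma card_D2 (B : {set (I + K)}) x y : x \in B -> (#|B :\ x :\ y| < #|B|)%N.
Proof.
move=> xB; apply: leq_ltn_trans (card_D1 xB).
by apply: subset_leq_card; apply: subsetDl.
Qed.

Definition h1 : seq I -> R := fun _ => 1.

Lemma cvg1 B : cvgn (SF h1 B).
Proof.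
have h1p : forall s, 0 <= h1 s by move=> s; rewrite /h1 ler01.
move: {2}#|B| (leqnn #|B|) => m; elim: m B => [|m IH] B.
  rewrite leqn0 => /eqP /cards0_eq ->.
  have nJ : ~~ inJ adj (set0 : {set (I + K)}).
    apply/negP => /and3P[_ /set0Pn[x]]; by rewrite !inE.
  apply: nondecreasing_is_cvgn; first exact: SF_nd.
  by exists (tF h1 set0 0) => _ [N _ <-]; apply: SF_notJ_le.
move=> Bm.
have [JB|nJ] := boolP (inJ adj B); last first.
  apply: nondecreasing_is_cvgn; first exact: SF_nd.
  by exists (tF h1 B 0) => _ [N _ <-]; apply: SF_notJ_le.
have [a0 aC] := CC_pos HI HK Hconn Hlam Hmu Hlam1 Hmu1 Hstab JB.
have IHs : forall x, x \in B -> cvgn (SF h1 (B :\ x)).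
  by move=> x xB; apply: IH; rewrite -ltnS (leq_trans (card_D1 xB)).
have IHs2 : forall x y, x \in B -> cvgn (SF h1 (B :\ x :\ y)).
  by move=> x y xB; apply: IH; rewrite -ltnS (leq_trans (card_D2 _ xB)).
pose r N := \sum_(j in partI B) \sum_(k in partK B) lam j * mu k *
     (SF h1 (B :\ inl j) N + SF h1 (B :\ inr k) N + SF h1 (B :\ inl j :\ inr k) N).
apply: (@cvg_core _ r _ _ (\sum_(j in partI B) \sum_(k in partK B) lam j * mu k *
     (limn (SF h1 (B :\ inl j)) + limn (SF h1 (B :\ inr k)) + limn (SF h1 (B :\ inl j :\ inr k)))) (SF_nd _ h1p) (ltW a0) aC).
  move=> N; rewrite SF_rec // -sum2_const /r -[in RHS]big_split /=; apply: eq_bigr => j _.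
  rewrite -[in RHS]big_split; apply: eq_bigr => k _.
  rewrite /h1 /=; ring.
move=> N; rewrite /r; apply: ler_sum => j; rewrite inE => jB; apply: ler_sum => k; rewrite inE => kB.
apply: ler_wpM2l; first by apply: mulr_ge0; apply: ltW.
apply: lerD; first apply: lerD.
all: apply: nondecreasing_cvgn_le; first exact: SF_nd.
- exact: (IHs _ jB).
- exact: (IHs _ kB).
- exact: (IHs2 _ _ jB).
Qed.

Definition hc (i : I) : seq I -> R := fun s => (count_mem i s)%:R.

Lemma SF_count i j B N :
  SF (fun s => hc i (rcons s j)) B N = SF (hc i) B N + (j == i)%:R * SF h1 B N.
Proof.
rewrite /SF mulr_sumr -big_split; apply: eq_bigr => n _ /=.
rewrite !tF_mk mulr_sumr -big_split; apply: eq_bigr => c _ /=.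
rewrite mulr_sumr -big_split; apply: eq_bigr => d _ /=.
rewrite /hc /h1 -cats1 count_cat /= addn0 natrD.
set x := (_ && _)%:R; set y := (count_mem i c)%:R; set z := (j == i)%:R.
by rewrite mul1r mulrDl mulrDr; congr (_ + _); rewrite mulrCA.
Qed.

Lemma cvgc i B : cvgn (SF (hc i) B).
Proof.
have hp : forall s, 0 <= hc i s by move=> s; rewrite /hc ler0n.
move: {2}#|B| (leqnn #|B|) => m; elim: m B => [|m IH] B.
  rewrite leqn0 => /eqP /cards0_eq ->.
  have nJ : ~~ inJ adj (set0 : {set (I + K)}).
    apply/negP => /and3P[_ /set0Pn[x]]; by rewrite !inE.
  apply: nondecreasing_is_cvgn; first exact: SF_nd.
  by exists (tF (hc i) set0 0) => _ [N _ <-]; apply: SF_notJ_le.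
move=> Bm.
have [JB|nJ] := boolP (inJ adj B); last first.
  apply: nondecreasing_is_cvgn; first exact: SF_nd.
  by exists (tF (hc i) B 0) => _ [N _ <-]; apply: SF_notJ_le.
have [a0 aC] := CC_pos HI HK Hconn Hlam Hmu Hlam1 Hmu1 Hstab JB.
have IHs : forall x, x \in B -> cvgn (SF (hc i) (B :\ x)).
  by move=> x xB; apply: IH; rewrite -ltnS (leq_trans (card_D1 xB)).
have IHs2 : forall x y, x \in B -> cvgn (SF (hc i) (B :\ x :\ y)).
  by move=> x y xB; apply: IH; rewrite -ltnS (leq_trans (card_D2 _ xB)).
pose r N := \sum_(j in partI B) \sum_(k in partK B) lam j * mu k *
     (SF (hc i) (B :\ inl j) N + SF (hc i) (B :\ inr k) N + SF (hc i) (B :\ inl j :\ inr k) N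
      + (j == i)%:R * (SF h1 B N + SF h1 (B :\ inl j) N + SF h1 (B :\ inr k) N
                       + SF h1 (B :\ inl j :\ inr k) N)).
apply: (@cvg_core _ r _ _ (\sum_(j in partI B) \sum_(k in partK B) lam j * mu k *
     (limn (SF (hc i) (B :\ inl j)) + limn (SF (hc i) (B :\ inr k))
      + limn (SF (hc i) (B :\ inl j :\ inr k))
      + (j == i)%:R * (limn (SF h1 B) + limn (SF h1 (B :\ inl j)) + limn (SF h1 (B :\ inr k))
                       + limn (SF h1 (B :\ inl j :\ inr k)))))
   (SF_nd _ hp) (ltW a0) aC).
  move=> N; rewrite SF_rec // -sum2_const /r -[in RHS]big_split /=; apply: eq_bigr => j _.
  rewrite -[in RHS]big_split; apply: eq_bigr => k _.
  rewrite (SF_count i j B N) (SF_count i j (B :\ inl j) N) (SF_count i j (B :\ inr k) N).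
  rewrite (SF_count i j (B :\ inl j :\ inr k) N) /=.
  set z := (j == i)%:R.
  move: (SF (hc i) B N) (SF (hc i) (B :\ inl j) N) (SF (hc i) (B :\ inr k) N) (SF (hc i) (B :\ inl j :\ inr k) N) => a1 a2 a3 a4.
  move: (SF h1 B N) (SF h1 (B :\ inl j) N) (SF h1 (B :\ inr k) N) (SF h1 (B :\ inl j :\ inr k) N) => b1 b2 b3 b4.
  move: z (lam j * mu k) => z w; ring.
have h1p : forall s, 0 <= h1 s by move=> s; rewrite /h1 ler01.
move=> N; rewrite /r; apply: ler_sum => j; rewrite inE => jB; apply: ler_sum => k; rewrite inE => kB.
apply: ler_wpM2l; first by apply: mulr_ge0; apply: ltW.
have Lc : forall X, cvgn (SF (hc i) X) -> forall N, SF (hc i) X N <= limn (SF (hc i) X).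
  by move=> X cX N'; apply: nondecreasing_cvgn_le => //; apply: SF_nd; exact: hp.
have L1 : forall X N, SF h1 X N <= limn (SF h1 X).
  by move=> X N'; apply: nondecreasing_cvgn_le; [apply: SF_nd; exact: h1p | exact: cvg1].
apply: lerD; first apply: lerD; first apply: lerD.
- exact: (Lc _ (IHs _ jB) N).
- exact: (Lc _ (IHs _ kB) N).
- exact: (Lc _ (IHs2 _ _ jB) N).
apply: ler_wpM2l; first by rewrite ler0n.
by apply: lerD; first apply: lerD; first apply: lerD; apply: L1.
Qed.
End Conv.
Section Final.
Variables (R : realType) (I K : finType) (adj : I -> K -> bool)
          (lam : I -> R) (mu : K -> R).
Hypothesis HI : (0 < #|I|)%N.
Hypothesis HK : (0 < #|K|)%N.
Hypothesis Hconn : graph_connected adj.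
Hypothesis Hlam : forall i, 0 < lam i.
Hypothesis Hmu : forall k, 0 < mu k.
Hypothesis Hlam1 : \sum_(i : I) lam i = 1.
Hypothesis Hmu1 : \sum_(k : K) mu k = 1.
Hypothesis Hstab : stable adj lam mu.
Local Open Scope classical_set_scope.
Local Open Scope ring_scope.

Local Notation W := (weight adj lam mu).
Local Notation valid := (valid_state adj).
Local Notation cls := (@state_classes I K _).
Local Notation tF := (tFun adj lam mu).
Local Notation CC := (CC adj lam mu).
Local Notation SF := (SF adj lam mu).
Local Notation pe := (pi_empty adj lam mu).
Local Notation h1 := (@h1 R I).
Local Notation hc := (@hc R I).

Let c1 B : cvgn (SF h1 B) := cvg1 HI HK Hconn Hlam Hmu Hlam1 Hmu1 Hstab (B:=B).
Let cc i B : cvgn (SF (hc i) B) := cvgc HI HK Hconn Hlam Hmu Hlam1 Hmu1 Hstab (i:=i) (B:=B).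

Lemma limn_scale (u : nat -> R) (a : R) : cvgn u -> limn (fun N => a * u N) = a * limn u.
Proof. by move=> cu; apply: cvg_lim => //; apply: cvgMl_tmp. Qed.

Lemma inner_eq (h : seq I -> R) B n :
  \sum_(c : n.-tuple I) \sum_(d : n.-tuple K | valid c d && (cls c d == B))
     (h c * Defs.pi adj lam mu c d) = pe * tF h B n.
Proof.
rewrite mulr_sumr; apply: eq_bigr => c _; rewrite mulr_sumr; apply: eq_bigr => d _.
by rewrite /Defs.pi mulrCA.
Qed.

Lemma piA_eq B : piA adj lam mu B = pe * limn (SF h1 B).
Proof.
rewrite /piA; case: ifP => J0.
  rewrite /rseries; transitivity (limn (fun N => pe * SF h1 B N)); last exact: limn_scale.
  apply: (congr1 (fun u : nat -> R => limn u)); apply: boolp.funext => N.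
  rewrite /SF mulr_sumr; apply: eq_bigr => n _; rewrite -inner_eq.
  by apply: eq_bigr => c _; apply: eq_bigr => d _; rewrite /h1 mul1r.
have -> : SF h1 B = fun _ => 0.
  apply: boolp.funext => N; rewrite /SF big1 // => n _; apply: tF_notJ0; by rewrite J0.
have -> : limn (fun _ : nat => (0:R)) = 0 by apply: cvg_lim => //; exact: cvg_cst.
by rewrite mulr0.
Qed.

Lemma ell_eq i B : ell adj lam mu i B = pe * limn (SF (hc i) B).
Proof.
rewrite /ell; case: ifP => J0.
  rewrite /rseries; transitivity (limn (fun N => pe * SF (hc i) B N)); last exact: limn_scale.
  apply: (congr1 (fun u : nat -> R => limn u)); apply: boolp.funext => N.
  by rewrite /SF mulr_sumr; apply: eq_bigr => n _; rewrite -inner_eq.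
have -> : SF (hc i) B = fun _ => 0.
  apply: boolp.funext => N; rewrite /SF big1 // => n _; apply: tF_notJ0; by rewrite J0.
have -> : limn (fun _ : nat => (0:R)) = 0 by apply: cvg_lim => //; exact: cvg_cst.
by rewrite mulr0.
Qed.


Lemma claim2 i (A : {set (I + K)}) : inl i \notin A -> ell adj lam mu i A = 0.
Proof.
move=> nA; rewrite ell_eq.
have -> : SF (hc i) A = fun _ => 0.
  apply: boolp.funext => N; rewrite /SF big1 // => n _.
  apply: big1 => c _; apply: big1 => d /andP[_ /eqP E]; rewrite /hc.
  have -> : count_mem i c = 0%N.
    apply/count_memPn; apply: contra nA => ic; by rewrite -E inE /= ic.
  by rewrite mulr0n mul0r.
have -> : limn (fun _ : nat => (0:R)) = 0 by apply: cvg_lim => //; exact: cvg_cst.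
by rewrite mulr0.
Qed.

Lemma claim1 i :
  meanL adj lam mu i = \sum_(A : {set (I + K)} | inJ0 adj A) ell adj lam mu i A.
Proof.
rewrite /meanL /rseries.
transitivity (limn (fun N => \sum_(A : {set (I + K)} | inJ0 adj A) pe * SF (hc i) A N)).
  apply: (congr1 (fun u : nat -> R => limn u)); apply: boolp.funext => N.
  rewrite /SF.
  under [RHS]eq_bigr => A _ do rewrite mulr_sumr.
  rewrite exchange_big; apply: eq_bigr => n _.
  under [RHS]eq_bigr => A _ do rewrite -(inner_eq (hc i)).
  rewrite exchange_big; apply: eq_bigr => c _.
  rewrite (partition_big (fun d => cls c d) (inJ0 adj)) //.
  by move=> d V; exact: cls_J0.
under [RHS]eq_bigr => A _ do rewrite ell_eq.
apply: cvg_lim => //.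
apply: cvg_big => //; first exact: add_continuous.
move=> A _; apply: cvgMl_tmp; exact: cc.
Qed.

Lemma decP2 (A : {set (I + K)}) (f : I -> R) :
  \sum_(j in partI A) \sum_(k in partK A) lam j * mu k * f j =
  muS mu (partK A) * \sum_(j in partI A) lam j * f j.
Proof.
rewrite mulr_sumr; apply: eq_bigr => j _; rewrite /muS mulr_suml.
by apply: eq_bigr => k _; rewrite mulrAC mulrC mulrA.
Qed.

Lemma decP3 (A : {set (I + K)}) (g : K -> R) :
  \sum_(j in partI A) \sum_(k in partK A) lam j * mu k * g k =
  lamS lam (partI A) * \sum_(k in partK A) mu k * g k.
Proof.
rewrite exchange_big mulr_sumr; apply: eq_bigr => k _; rewrite /lamS mulr_suml.
by apply: eq_bigr => j _; rewrite -!mulrA [mu k * _]mulrC.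
Qed.

Lemma decP4 (A : {set (I + K)}) i (F : I -> K -> R) : i \in partI A ->
  \sum_(j in partI A) \sum_(k in partK A) (j == i)%:R * (lam j * mu k * F j k) =
  lam i * \sum_(k in partK A) mu k * F i k.
Proof.
move=> iA; rewrite (bigD1 i) //= [X in _ + X]big1 ?addr0; last first.
  move=> j /andP[_ ji]; apply: big1 => k _; by rewrite (negbTE ji) mulr0n mul0r.
rewrite mulr_sumr; apply: eq_bigr => k _; by rewrite eqxx mulr1n mul1r mulrA.
Qed.

Lemma lim_rec i (A : {set (I + K)}) : inJ adj A ->
  CC A * limn (SF (hc i) A) =
  \sum_(j in partI A) \sum_(k in partK A) lam j * mu k *
    (limn (SF (hc i) A) + limn (SF (hc i) (A :\ inl j)) + limn (SF (hc i) (A :\ inr k))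
     + limn (SF (hc i) (A :\ inl j :\ inr k))
     + (j == i)%:R * (limn (SF h1 A) + limn (SF h1 (A :\ inl j)) + limn (SF h1 (A :\ inr k))
                      + limn (SF h1 (A :\ inl j :\ inr k)))).
Proof.
move=> HA.
have E : forall N, CC A * SF (hc i) A N.+1 =
  \sum_(j in partI A) \sum_(k in partK A) lam j * mu k *
    (SF (hc i) A N + SF (hc i) (A :\ inl j) N + SF (hc i) (A :\ inr k) N
     + SF (hc i) (A :\ inl j :\ inr k) N
     + (j == i)%:R * (SF h1 A N + SF h1 (A :\ inl j) N + SF h1 (A :\ inr k) N
                      + SF h1 (A :\ inl j :\ inr k) N)).
  move=> N; rewrite (SF_rec HI HK Hconn Hlam Hmu Hlam1 Hmu1 Hstab (hc i) N HA).
  apply: eq_bigr => j _; apply: eq_bigr => k _.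
  rewrite (SF_count adj lam mu i j A N) (SF_count adj lam mu i j (A :\ inl j) N) (SF_count adj lam mu i j (A :\ inr k) N).
  rewrite (SF_count adj lam mu i j (A :\ inl j :\ inr k) N) /=.
  move: ((j == i)%:R) => z.
  move: (SF (hc i) A N) (SF (hc i) (A :\ inl j) N) (SF (hc i) (A :\ inr k) N) (SF (hc i) (A :\ inl j :\ inr k) N) => a1 a2 a3 a4.
  move: (SF h1 A N) (SF h1 (A :\ inl j) N) (SF h1 (A :\ inr k) N) (SF h1 (A :\ inl j :\ inr k) N) => b1 b2 b3 b4.
  move: (lam j * mu k) => w; ring.
have cL : (fun N => CC A * SF (hc i) A N.+1) @ \oo --> CC A * limn (SF (hc i) A).
  apply: cvgMl_tmp; have H := @cc i A; by rewrite -cvg_shiftS in H.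
rewrite (boolp.funext E) in cL.
apply: (cvg_unique _ cL) => //.
apply: cvg_big => //; first exact: add_continuous; move=> j _.
apply: cvg_big => //; first exact: add_continuous; move=> k _.
apply: cvgMl_tmp.
apply: cvgD; first (apply: cvgD; first (apply: cvgD; first apply: cvgD)).
1-4: exact: cc.
apply: cvgMl_tmp.
apply: cvgD; first (apply: cvgD; first apply: cvgD).
all: exact: c1.
Qed.

Lemma Qdec i (A : {set (I + K)}) : i \in partI A ->
  let m X := limn (SF (hc i) X) in let l X := limn (SF h1 X) in
  \sum_(j in partI A) \sum_(k in partK A) lam j * mu k *
    (m A + m (A :\ inl j) + m (A :\ inr k) + m (A :\ inl j :\ inr k)
     + (j == i)%:R * (l A + l (A :\ inl j) + l (A :\ inr k) + l (A :\ inl j :\ inr k))) =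
  lamS lam (partI A) * muS mu (partK A) * m A +
  (lam i * muS mu (partK A) * (l A + l (A :\ inl i))
   + lam i * \sum_(k in partK A) mu k * (l (A :\ inr k) + l (A :\ inl i :\ inr k))
   + muS mu (partK A) * \sum_(j in partI A) lam j * m (A :\ inl j)
   + lamS lam (partI A) * \sum_(k in partK A) mu k * m (A :\ inr k)
   + \sum_(j in partI A) \sum_(k in partK A) lam j * mu k * m (A :\ inl j :\ inr k)).
Proof.
move=> iA m l.
have e1 : lam i * muS mu (partK A) * (l A + l (A :\ inl i))
   + lam i * \sum_(k in partK A) mu k * (l (A :\ inr k) + l (A :\ inl i :\ inr k)) =
   lam i * \sum_(k in partK A) mu k * (l A + l (A :\ inl i) + l (A :\ inr k) + l (A :\ inl i :\ inr k)).
  rewrite -mulrA -mulrDr; congr (_ * _); rewrite /muS mulr_suml.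
  under [RHS]eq_bigr => k _ do rewrite -addrA mulrDr.
  by rewrite big_split.
rewrite e1.
rewrite -(decP4 (fun j k => l A + l (A :\ inl j) + l (A :\ inr k) + l (A :\ inl j :\ inr k)) iA).
rewrite -(decP2 A (fun j => m (A :\ inl j))) -(decP3 A (fun k => m (A :\ inr k))) -(sum2_const lam mu A (m A)).
rewrite -!big_split; apply: eq_bigr => j _; rewrite -!big_split; apply: eq_bigr => k _.
cbv beta.
move: ((j == i)%:R) => z.
move: (m A) (m (A :\ inl j)) (m (A :\ inr k)) (m (A :\ inl j :\ inr k)) => a1 a2 a3 a4.
move: (l A) (l (A :\ inl j)) (l (A :\ inr k)) (l (A :\ inl j :\ inr k)) => b1 b2 b3 b4.
move: (lam j) (mu k) => w1 w2; rewrite /=; ring.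
Qed.

Lemma claim3 i (A : {set (I + K)}) : inJ adj A -> inl i \in A ->
      Delta adj lam mu A * ell adj lam mu i A =
        lam i * muS mu (partK A)
          * (piA adj lam mu A + piA adj lam mu (A :\ inl i))
      + lam i * \sum_(k in partK A)
          mu k * (piA adj lam mu (A :\ inr k) + piA adj lam mu (A :\ inl i :\ inr k))
      + muS mu (partK A) * \sum_(j in partI A) lam j * ell adj lam mu i (A :\ inl j)
      + lamS lam (partI A) * \sum_(k in partK A) mu k * ell adj lam mu i (A :\ inr k)
      + \sum_(j in partI A) \sum_(k in partK A)
          lam j * mu k * ell adj lam mu i (A :\ inl j :\ inr k).
Proof.
move=> HA iA; have iAI : i \in partI A by rewrite inE.
have LR := lim_rec i HA.
have Q := Qdec iAI; cbv zeta in Q; rewrite Q in LR.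
have s1 : \sum_(k in partK A)
          mu k * (piA adj lam mu (A :\ inr k) + piA adj lam mu (A :\ inl i :\ inr k)) =
   pe * \sum_(k in partK A) mu k * (limn (SF h1 (A :\ inr k)) + limn (SF h1 (A :\ inl i :\ inr k))).
  by rewrite mulr_sumr; apply: eq_bigr => k _; rewrite !piA_eq; ring.
have s2 : \sum_(j in partI A) lam j * ell adj lam mu i (A :\ inl j) =
   pe * \sum_(j in partI A) lam j * limn (SF (hc i) (A :\ inl j)).
  by rewrite mulr_sumr; apply: eq_bigr => j _; rewrite ell_eq mulrCA.
have s3 : \sum_(k in partK A) mu k * ell adj lam mu i (A :\ inr k) =
   pe * \sum_(k in partK A) mu k * limn (SF (hc i) (A :\ inr k)).
  by rewrite mulr_sumr; apply: eq_bigr => k _; rewrite ell_eq mulrCA.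
have s4 : \sum_(j in partI A) \sum_(k in partK A)
          lam j * mu k * ell adj lam mu i (A :\ inl j :\ inr k) =
   pe * \sum_(j in partI A) \sum_(k in partK A) lam j * mu k * limn (SF (hc i) (A :\ inl j :\ inr k)).
  rewrite mulr_sumr; apply: eq_bigr => j _; rewrite mulr_sumr; apply: eq_bigr => k _.
  by rewrite ell_eq mulrCA.
rewrite s1 s2 s3 s4 !piA_eq ell_eq.
have -> : Delta adj lam mu A = CC A - lamS lam (partI A) * muS mu (partK A) by [].
transitivity (pe * (CC A * limn (SF (hc i) A)
                    - lamS lam (partI A) * muS mu (partK A) * limn (SF (hc i) A))).
  ring.
rewrite LR; ring.
Qed.
End Final.

Theorem proposition2 (R : realType) (I K : finType) (adj : I -> K -> bool)
    (lam : I -> R) (mu : K -> R)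
    (HI : (0 < #|I|)%N) (HK : (0 < #|K|)%N)
    (Hconn : graph_connected adj)
    (Hlam : forall i, 0 < lam i) (Hmu : forall k, 0 < mu k)
    (Hlam1 : \sum_(i : I) lam i = 1) (Hmu1 : \sum_(k : K) mu k = 1)
    (Hstab : stable adj lam mu)
    (i : I) :
  meanL adj lam mu i = \sum_(A : {set (I + K)} | inJ0 adj A) ell adj lam mu i A
  /\ (forall A : {set (I + K)}, inl i \notin A -> ell adj lam mu i A = 0)
  /\ (forall A : {set (I + K)}, inJ adj A -> inl i \in A ->
      Delta adj lam mu A * ell adj lam mu i A =
        lam i * muS mu (partK A)
          * (piA adj lam mu A + piA adj lam mu (A :\ inl i))
      + lam i * \sum_(k in partK A)
          mu k * (piA adj lam mu (A :\ inr k) + piA adj lam mu (A :\ inl i :\ inr k))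
      + muS mu (partK A) * \sum_(j in partI A) lam j * ell adj lam mu i (A :\ inl j)
      + lamS lam (partI A) * \sum_(k in partK A) mu k * ell adj lam mu i (A :\ inr k)
      + \sum_(j in partI A) \sum_(k in partK A)
          lam j * mu k * ell adj lam mu i (A :\ inl j :\ inr k)).
Proof.
split; first exact: (claim1 HI HK Hconn Hlam Hmu Hlam1 Hmu1 Hstab).
split; first by move=> A; exact: (claim2 HI HK Hconn Hlam Hmu Hlam1 Hmu1 Hstab).
by move=> A; exact: (claim3 HI HK Hconn Hlam Hmu Hlam1 Hmu1 Hstab).
Qed.
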